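(* Let $s\geq 3$ be an integer and let $q\in(0,1)$ be the root of $X^2-sX+1=0$ in $(0,1)$. Put $x_n=\dfrac{q^n-q^{-n}}{q-q^{-1}}$ for $n\in\mathbb{N}$ (these are integers), $x_0!=1$, $x_n!=x_1\cdots x_n$, and $\mathcal{N}(t)=\sum_{n\ge0}t^n/x_n!$. For $z\in\mathbb{C}$ and $t\in\mathbb{R}$ define $$\check z(t)=\frac{z}{\mathcal{N}(|z|^2)}\sum_{n=0}^{\infty}\frac{|z|^{2n}}{x_n!}\exp\big(i(x_{n+2}-x_{n+1})t\big).$$ Then for every $z\in\mathbb{C}$ the curve $t\mapsto\check z(t)$ is periodic with period $2\pi$.
   Context: $\check z(t)$ is the coherent-state expectation of the time-evolved lowering operator, i.e. the semi-classical phase-space trajectory for the $q$-deformed harmonic oscillator whose spectrum is $(x_{n+1})$. *)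

(* Defs.v *)
From Stdlib Require Import Reals.
From Coquelicot Require Import Coquelicot.
Open Scope R_scope.

Definition xq (q : R) (n : nat) : R := (q ^ n - / q ^ n) / (q - / q).

Fixpoint xfact (q : R) (n : nat) : R :=
  match n with
  | O => 1
  | S m => xfact q m * xq q (S m)
  end.

Definition Nq (q t : R) : R := Series (fun n => t ^ n / xfact q n).

Definition cexpi (theta : R) : C := (cos theta, sin theta).

Definition Csum (a : nat -> C) : C :=
  (Series (fun n => fst (a n)), Series (fun n => snd (a n))).

Definition zcheck (q : R) (z : C) (t : R) : C :=
  let r := (Cmod z) ^ 2 in
  Cmult (Cdiv z (RtoC (Nq q r)))
        (Csum (fun n => Cmult (RtoC (r ^ n / xfact q n))
                              (cexpi ((xq q (n + 2) - xq q (n + 1)) * t)))).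

(* Main.v *)
Require Import Defs.
From Stdlib Require Import Reals Lra Lia.
From Coquelicot Require Import Coquelicot.
Open Scope R_scope.

Lemma xq_rec (s : nat) (q : R) : 0 < q < 1 -> q ^ 2 - INR s * q + 1 = 0 ->
  forall n, xq q (S (S n)) = INR s * xq q (S n) - xq q n.
Proof.
  intros Hq Hs n.
  assert (Hs' : INR s = q + / q).
  { apply (Rmult_eq_reg_r q); [|lra]. field_simplify; [|lra]. simpl in Hs. nra. }
  rewrite Hs'. unfold xq.
  assert (Hn : q ^ n <> 0) by (apply pow_nonzero; lra).
  assert (Hd : q - / q <> 0).
  { intro H. assert (q * q = 1). { assert (E : q = / q) by lra. rewrite E at 1. apply Rinv_l; lra. } nra. }
  simpl. field. repeat split; try lra; auto. all: intro HH; apply Hd; assert (q = / q) by (apply (Rmult_eq_reg_l q); [rewrite Rinv_r; lra | lra]); lra.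
Qed.

Lemma xq_nat (s : nat) (q : R) : (3 <= s)%nat -> 0 < q < 1 -> q ^ 2 - INR s * q + 1 = 0 ->
  forall n, exists a b : nat, xq q n = INR a /\ xq q (S n) = INR b /\ (a <= b)%nat.
Proof.
  intros H3 Hq Hs n. induction n as [|n IH].
  - assert (Hd : q - / q <> 0).
    { intro H. assert (q * q = 1). { assert (E : q = / q) by lra. rewrite E at 1. apply Rinv_l; lra. } nra. }
    exists 0%nat, 1%nat. unfold xq. simpl. split; [|split; [|lia]].
    + rewrite Rinv_1. unfold Rdiv. ring.
    + rewrite Rmult_1_r. field. split; [lra|]. intro HH; apply Hd; assert (q = / q) by (apply (Rmult_eq_reg_l q); [rewrite Rinv_r; lra | lra]); lra.
  - destruct IH as [a [b [Ha [Hb Hab]]]].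
    exists b, (s * b - a)%nat. split; [exact Hb|]. split; [|nia].
    rewrite (xq_rec s q Hq Hs), Ha, Hb, minus_INR, mult_INR; [reflexivity|nia].
Qed.

Theorem mainTheorem5 (s : nat) (q : R) :
  (3 <= s)%nat ->
  0 < q < 1 ->
  q ^ 2 - INR s * q + 1 = 0 ->
  forall (z : C) (t : R), zcheck q z (t + 2 * PI) = zcheck q z t.
Proof.
  intros H3 Hq Hs z t. unfold zcheck, Csum.
  assert (Hk : forall n, exists k : nat, xq q (n + 2) - xq q (n + 1) = INR k).
  { intro n. destruct (xq_nat s q H3 Hq Hs (S n)) as [a [b [Ha [Hb Hab]]]].
    exists (b - a)%nat. rewrite minus_INR by lia.
    replace (n + 2)%nat with (S (S n)) by lia. replace (n + 1)%nat with (S n) by lia.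
    rewrite Ha, Hb. reflexivity. }
  assert (Hc : forall n, cexpi ((xq q (n + 2) - xq q (n + 1)) * (t + 2 * PI))
                       = cexpi ((xq q (n + 2) - xq q (n + 1)) * t)).
  { intro n. destruct (Hk n) as [k Hk']. rewrite Hk'. unfold cexpi.
    replace (INR k * (t + 2 * PI)) with (INR k * t + 2 * INR k * PI) by ring.
    rewrite cos_period, sin_period. reflexivity. }
  f_equal. f_equal.
  - apply Series_ext. intro n. rewrite Hc. reflexivity.
  - apply Series_ext. intro n. rewrite Hc. reflexivity.
Qed.
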